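(* Let $(\underline F_X,\overline F_X)$ and $(\underline F_Y,\overline F_Y)$ be $p$-boxes, $F_Z$ a distribution function, and let $F_X,F_Y$ be distribution functions with $\underline F_X\le F_X\le\overline F_X$, $\underline F_Y\le F_Y\le\overline F_Y$. Put $F=F_XF_Z$, $G=F_YF_Z$, $K=F_Y+F_Z-F_YF_Z$ and $\underline F=\underline F_XF_Z$, $\overline F=\overline F_XF_Z$, $\underline G=\underline F_YF_Z$, $\overline G=\overline F_YF_Z$, $\underline K=\underline F_Y+F_Z-\underline F_YF_Z$, $\overline K=\overline F_Y+F_Z-\overline F_YF_Z$. Let $\underline\phi,\underline\psi,\underline\chi$ be the pointwise infima of the functions $\phi$, $\psi$, $\chi$ (respectively) associated to $(\underline F_X,\underline F_Y,F_Z)$, and $\overline\phi,\overline\psi,\overline\chi$ the pointwise suprema of those associated to $(\overline F_X,\overline F_Y,F_Z)$. Then: (i) $\underline F\le F\le\overline F$, $\underline G\le G\le\overline G$, $\underline K\le K\le\overline K$; (ii) there exist $\phi,\psi,\chi:[0,1]\to[0,1]$ associated to $(F_X,F_Y,F_Z)$ (i.e. to $F$, $G$, $K$) with $\underline\phi\le\phi\le\overline\phi$, $\underline\psi\le\psi\le\overline\psi$, $\underline\chi\le\chi\le\overline\chi$.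
   Context: A distribution function is a non-decreasing map $\mathbb R\to[0,1]$ (no continuity assumed) with limits $0$ at $-\infty$ and $1$ at $+\infty$; a $p$-box is a pair of distribution functions $(\underline F,\overline F)$ with $\underline F\le\overline F$. For distribution functions $(A,B,C)$ (playing the roles of $F_X,F_Y,F_Z$): $\phi$ is associated if $\phi$ is non-decreasing, $\phi(0)=0$, $\phi(1)=1$, $\phi(u)/u$ non-increasing on $(0,1]$, and $\phi(A(x)C(x))=A(x)$ whenever $A(x)C(x)>0$; $\psi$ is associated if it satisfies the same conditions with $B$ in place of $A$; $\chi$ is associated if $\chi$ is non-decreasing, $\chi(0)=0$, $\chi(1)=1$, $\frac{1-\chi(w)}{w-\chi(w)}$ non-increasing on $[0,1]$ (values in $[1,\infty]$), and $\chi(B(y)+C(y)-B(y)C(y))=B(y)$ whenever $B(y)+C(y)-B(y)C(y)<1$. *)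

(* Defs.v *)
From HB Require Import structures.
From mathcomp Require Import all_boot all_order all_algebra.
From mathcomp Require Import all_classical all_reals all_analysis.
Set Implicit Arguments. Unset Strict Implicit. Unset Printing Implicit Defensive.
Import Order.TTheory GRing.Theory Num.Theory.
Import numFieldNormedType.Exports.
Local Open Scope classical_set_scope.
Local Open Scope ring_scope.

(* A distribution function: non-decreasing R -> [0,1] (no continuity),
   limit 0 at -oo and 1 at +oo. *)
Definition distribution_function {R : realType} (F : R -> R) : Prop :=
  [/\ {homo F : x y / x <= y},
      (forall x, 0 <= F x <= 1),
      F x @[x --> -oo] --> (0 : R) &
      F x @[x --> +oo] --> (1 : R)].

Definition pbox {R : realType} (Fl Fu : R -> R) : Prop :=
  [/\ distribution_function Fl, distribution_function Fu &
      forall x, Fl x <= Fu x].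

(* Common conditions on a function phi : [0,1] -> [0,1] (represented as
   R -> R; only its values on [0,1] matter). *)
Definition unit_map {R : realType} (f : R -> R) : Prop :=
  [/\ (forall u, 0 <= u <= 1 -> 0 <= f u <= 1),
      (forall u v, 0 <= u -> u <= v -> v <= 1 -> f u <= f v),
      f 0 = 0 & f 1 = 1].

Definition phi_cond {R : realType} (A C : R -> R) (phi : R -> R) : Prop :=
  [/\ unit_map phi,
      (forall u v, 0 < u -> u <= v -> v <= 1 -> phi v / v <= phi u / u) &
      (forall x, 0 < A x * C x -> phi (A x * C x) = A x)].

Definition assoc_phi {R : realType} (A B C : R -> R) (phi : R -> R) : Prop :=
  phi_cond A C phi.

Definition assoc_psi {R : realType} (A B C : R -> R) (psi : R -> R) : Prop :=
  phi_cond B C psi.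

Definition chi_ratio {R : realType} (chi : R -> R) (w : R) : \bar R :=
  if w - chi w == 0 then +oo%E else ((1 - chi w) / (w - chi w))%:E.

(* chi associated to (A,B,C): the ratio takes values in [1,+oo] and is
   non-increasing (on [0,1)), and chi(B y + C y - B y C y) = B y whenever
   B y + C y - B y C y < 1. *)
Definition assoc_chi {R : realType} (A B C : R -> R) (chi : R -> R) : Prop :=
  [/\ unit_map chi,
      (forall w, 0 <= w < 1 -> (1 <= chi_ratio chi w)%E),
      (forall w1 w2, 0 <= w1 -> w1 <= w2 -> w2 < 1 ->
         (chi_ratio chi w2 <= chi_ratio chi w1)%E) &
      (forall y, B y + C y - B y * C y < 1 ->
         chi (B y + C y - B y * C y) = B y)].

Definition pinf {R : realType} (P : (R -> R) -> Prop) (u : R) : \bar R :=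
  ereal_inf [set (f u)%:E | f in P].
Definition psup {R : realType} (P : (R -> R) -> Prop) (u : R) : \bar R :=
  ereal_sup [set (f u)%:E | f in P].

(* Main.v *)
Require Import Defs.
From HB Require Import structures.
From mathcomp Require Import all_boot all_order all_algebra.
From mathcomp Require Import all_classical all_reals all_analysis.
From mathcomp Require Import ring lra.
Import Order.TTheory GRing.Theory Num.Theory.
Local Open Scope classical_set_scope.
Local Open Scope ring_scope.

Section Gen.
Set Implicit Arguments.
Variable R : realType.
Implicit Types a c : R -> R.

Definition DS a c (u : R) : set R :=
  [set u] `|` [set Order.min (a x) (u / c x) | x in [set x | 0 < a x * c x]].
Definition D a c (u : R) : R := sup (DS a c u).
Definition unitv (a : R -> R) := forall x, 0 <= a x <= 1.
Definition comon a c := forall x y,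
  (a x <= a y /\ c x <= c y) \/ (a y <= a x /\ c y <= c x).

Lemma DS_ub a c u e : unitv a -> DS a c u e -> e <= Order.max u 1.
Proof.
move=> Ha [->|[x _ <-]]; first by rewrite le_max lexx.
rewrite le_max; apply/orP; right; rewrite ge_min; apply/orP; left.
by case/andP: (Ha x).
Qed.

Lemma D_ge a c u e : unitv a -> DS a c u e -> e <= D a c u.
Proof.
move=> Ha He; apply: sup_upper_bound => //; split.
  by exists u; left.
by exists (Order.max u 1) => y; apply: DS_ub.
Qed.

Lemma D_le a c u b : (forall e, DS a c u e -> e <= b) -> D a c u <= b.
Proof. by move=> H; apply: ge_sup; [exists u; left|]. Qed.

Lemma cpos a c x : unitv a -> 0 < a x * c x -> 0 < c x.
Proof.
move=> Ha h; rewrite lt_neqAle; apply/andP; split.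
  by apply/eqP => e; move: h; rewrite -e mulr0 ltxx.
case/andP: (Ha x) => a0 _; rewrite leNgt; apply/negP => cn.
have : a x * c x <= 0 by rewrite mulr_ge0_le0 // ltW.
by rewrite leNgt h.
Qed.

Lemma min_mono (a p q : R) : p <= q -> Order.min a p <= Order.min a q.
Proof.
by move=> pq; rewrite le_min !ge_min lexx pq orbT.
Qed.

Lemma D_range a c u : unitv a -> 0 <= u <= 1 -> u <= D a c u /\ D a c u <= 1.
Proof.
move=> Ha /andP[u0 u1]; split; first by apply: D_ge => //; left.
apply: D_le => e [->//|[x _ <-]].
by rewrite ge_min; case/andP: (Ha x) => _ ->.
Qed.

Lemma D_mono a c u v : unitv a -> u <= v -> D a c u <= D a c v.
Proof.
move=> Ha uv; apply: D_le => e [->|[x hx <-]].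
  by apply: le_trans uv _; apply: D_ge => //; left.
have h : DS a c v (Order.min (a x) (v / c x)) by right; exists x.
apply: le_trans (D_ge Ha h).
have cx := @cpos a c x Ha hx.
by apply: min_mono; rewrite ler_pdivrMr // divfK // gt_eqF.
Qed.

Lemma D0 a c : unitv a -> D a c 0 = 0.
Proof.
move=> Ha; apply/eqP; rewrite eq_le; apply/andP; split.
  apply: D_le => e [->//|[x _ <-]].
  by rewrite mul0r ge_min lexx orbT.
by apply: D_ge => //; left.
Qed.

Lemma D1 a c : unitv a -> D a c 1 = 1.
Proof.
move=> Ha; have [h1 h2] := @D_range a c 1 Ha ltac:(by rewrite ler01 lexx).
by apply/eqP; rewrite eq_le h1 h2.
Qed.

Lemma D_ratio a c u v : unitv a -> 0 < u -> u <= v ->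
  D a c v * u <= D a c u * v.
Proof.
move=> Ha u0 uv.
have hu : u <= D a c u by apply: D_ge => //; left.
rewrite -ler_pdivlMr //.
apply: D_le => e [->|[x hx <-]].
  rewrite ler_pdivlMr // [v * u]mulrC; apply: ler_wpM2r => //; apply: le_trans uv; exact: ltW.
have cx := @cpos a c x Ha hx.
have hd : DS a c u (Order.min (a x) (u / c x)) by right; exists x.
have := D_ge Ha hd.
rewrite ler_pdivlMr //.
move=> h; apply: le_trans (ler_wpM2r _ h); last by apply: le_trans uv; exact: ltW.
case/andP: (Ha x) => a0 a1.
case/orP: (le_total (a x) (u / c x)) => h2.
  rewrite (min_l h2).
  have m1 : Order.min (a x) (v / c x) <= a x by rewrite ge_min lexx.
  apply: le_trans (ler_wpM2r (ltW u0) m1) _; exact: ler_wpM2l.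
rewrite (min_r h2).
have m2 : Order.min (a x) (v / c x) <= v / c x by rewrite ge_min lexx orbT.
apply: le_trans (ler_wpM2r (ltW u0) m2) _.
by have -> : v / c x * u = u / c x * v by ring.
Qed.

Lemma D_at a c y : unitv a -> unitv c -> comon a c -> 0 < a y * c y ->
  D a c (a y * c y) = a y.
Proof.
move=> Ha Hc Hco hy.
have cy := @cpos a c y Ha hy.
have e1 : a y * c y / c y = a y by rewrite mulfK // gt_eqF.
apply/eqP; rewrite eq_le; apply/andP; split; last first.
  have hd : DS a c (a y * c y) (Order.min (a y) (a y * c y / c y)) by right; exists y.
  by have := D_ge Ha hd; rewrite e1 minxx.
apply: D_le => e [->|[x hx <-]].
  case/andP: (Ha y) => a0 _; case/andP: (Hc y) => _ c1.
  by rewrite -[X in _ <= X]mulr1 ler_wpM2l.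
have cx := @cpos a c x Ha hx.
case: (Hco x y) => [[h1 _]|[_ h2]]; rewrite ge_min; apply/orP; [by left|right].
rewrite ler_pdivrMr //; apply: ler_wpM2l => //.
by case/andP: (Ha y).
Qed.

Lemma D_monoa a1 a2 c u : unitv a1 -> unitv a2 -> unitv c -> (forall x, a1 x <= a2 x) ->
  D a1 c u <= D a2 c u.
Proof.
move=> H1 H2 Hc H12; apply: D_le => e [->|[x hx <-]].
  by apply: D_ge => //; left.
have hx2 : 0 < a2 x * c x.
  apply: lt_le_trans hx _; apply: ler_wpM2r => //; by case/andP: (Hc x).
have hd : DS a2 c u (Order.min (a2 x) (u / c x)) by right; exists x.
apply: le_trans (D_ge H2 hd).
by rewrite le_min !ge_min lexx H12 orbT.
Qed.

Lemma phi_ok A C : unitv A -> unitv C -> comon A C -> phi_cond A C (D A C).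
Proof.
move=> HA HC Hco; split.
- split.
  + move=> u hu; have [h1 h2] := @D_range A C u HA hu.
    case/andP: hu => u0 _; rewrite h2 andbT; exact: le_trans h1.
  + by move=> u v _ uv _; apply: D_mono.
  + exact: D0.
  + exact: D1.
- move=> u v u0 uv v1.
  have v0 : 0 < v by apply: lt_le_trans uv.
  rewrite ler_pdivrMr // mulrAC ler_pdivlMr //; exact: D_ratio.
- by move=> x hx; apply: D_at.
Qed.

Definition chiD B C (w : R) : R := 1 - D (fun x => 1 - B x) (fun x => 1 - C x) (1 - w).

Lemma unitv_neg B : unitv B -> unitv (fun x => 1 - B x).
Proof. by move=> H x; case/andP: (H x) => h1 h2; apply/andP; split; lra. Qed.

Lemma comon_neg B C : comon B C -> comon (fun x => 1 - B x) (fun x => 1 - C x).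
Proof.
move=> H x y; case: (H x y) => [[h1 h2]|[h1 h2]]; [right|left]; split; lra.
Qed.

Lemma chi_ok A B C : unitv B -> unitv C -> comon B C -> assoc_chi A B C (chiD B C).
Proof.
move=> HB HC Hco.
have HB' := unitv_neg HB; have HC' := unitv_neg HC; have Hco' := comon_neg Hco.
set B' := (fun x => 1 - B x) in HB' HC' Hco' *.
set C' := (fun x => 1 - C x) in HC' Hco' *.
rewrite /chiD -/B' -/C'.
split.
- split.
  + move=> w /andP[w0 w1].
    have [h1 h2] := @D_range B' C' (1 - w) HB' ltac:(apply/andP; split; lra).
    apply/andP; split; lra.
  + move=> u v u0 uv v1.
    have := @D_mono B' C' (1 - v) (1 - u) HB' ltac:(lra); lra.
  + by rewrite subr0 D1 // subrr.
  + by rewrite subrr D0 // subr0.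
- move=> w /andP[w0 w1].
  have [h1 h2] := @D_range B' C' (1 - w) HB' ltac:(apply/andP; split; lra).
  rewrite /chi_ratio; case: eqP => [_|hne]; first exact: leey.
  rewrite lee_fin.
  have hp : 0 < w - (1 - D B' C' (1 - w)).
    rewrite lt_neqAle; apply/andP; split; last lra.
    by apply/eqP => e; apply: hne; rewrite -e.
  rewrite ler_pdivlMr // mul1r; lra.
- move=> w1 w2 w10 w12 w21.
  have [h11 h12] := @D_range B' C' (1 - w1) HB' ltac:(apply/andP; split; lra).
  have [h21 h22] := @D_range B' C' (1 - w2) HB' ltac:(apply/andP; split; lra).
  have hr := @D_ratio B' C' (1 - w2) (1 - w1) HB' ltac:(lra) ltac:(lra).
  set D1' := D B' C' (1 - w1) in h11 h12 hr *.
  set D2' := D B' C' (1 - w2) in h21 h22 hr *.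
  rewrite /chi_ratio; case: (w1 - (1 - D1') =P 0) => [_|hne1]; first exact: leey.
  case: (w2 - (1 - D2') =P 0) => [he2|hne2].
    exfalso; apply: hne1.
    have e2 : D2' = 1 - w2 by lra.
    rewrite e2 in hr.
    have : D1' <= 1 - w1.
      by rewrite -(@ler_pM2r _ (1 - w2)) ?[_ * (1 - w1)]mulrC //; lra.
    lra.
  rewrite lee_fin.
  have hp1 : 0 < w1 - (1 - D1').
    rewrite lt_neqAle; apply/andP; split; last lra.
    by apply/eqP => e; apply: hne1; rewrite -e.
  have hp2 : 0 < w2 - (1 - D2').
    rewrite lt_neqAle; apply/andP; split; last lra.
    by apply/eqP => e; apply: hne2; rewrite -e.
  rewrite ler_pdivrMr // mulrAC ler_pdivlMr //.
  have -> : 1 - (1 - D2') = D2' by ring.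
  have -> : 1 - (1 - D1') = D1' by ring.
  rewrite -/D1' -/D2'; nra.
- move=> y hy.
  have e : B y + C y - B y * C y = 1 - B' y * C' y by rewrite /B' /C'; ring.
  rewrite e.
  have hp : 0 < B' y * C' y by rewrite /B' /C'; lra.
  by rewrite (_ : 1 - (1 - B' y * C' y) = B' y * C' y) ?D_at // ?/B'; ring.
Qed.

Lemma dist_unit (F : R -> R) : distribution_function F -> unitv F.
Proof. by case. Qed.
Lemma dist_mono (F : R -> R) : distribution_function F -> {homo F : x y / x <= y}.
Proof. by case. Qed.
Lemma comon_mono (A C : R -> R) : {homo A : x y / x <= y} -> {homo C : x y / x <= y} -> comon A C.
Proof.
move=> hA hC x y; case/orP: (le_total x y) => h; [left|right]; split; by [apply: hA|apply: hC].
Qed.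
End Gen.
Arguments comon_mono {R A C}.
Arguments D {R}. Arguments chiD {R}.

Theorem proposition5 (R : realType)
  (FXl FXu FYl FYu FZ FX FY : R -> R) :
  pbox FXl FXu -> pbox FYl FYu -> distribution_function FZ ->
  distribution_function FX -> distribution_function FY ->
  (forall x, FXl x <= FX x <= FXu x) ->
  (forall x, FYl x <= FY x <= FYu x) ->
  (* (i) *)
  ((forall x, FXl x * FZ x <= FX x * FZ x <= FXu x * FZ x) /\
   (forall x, FYl x * FZ x <= FY x * FZ x <= FYu x * FZ x) /\
   (forall x, FYl x + FZ x - FYl x * FZ x <= FY x + FZ x - FY x * FZ x
              <= FYu x + FZ x - FYu x * FZ x)) /\
  (* (ii) *)
  (exists phi psi chi : R -> R,
     [/\ assoc_phi FX FY FZ phi, assoc_psi FX FY FZ psi,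
         assoc_chi FX FY FZ chi &
      forall u, 0 <= u <= 1 ->
        [/\ (pinf (assoc_phi FXl FYl FZ) u <= (phi u)%:E
               <= psup (assoc_phi FXu FYu FZ) u)%E,
            (pinf (assoc_psi FXl FYl FZ) u <= (psi u)%:E
               <= psup (assoc_psi FXu FYu FZ) u)%E &
            (pinf (assoc_chi FXl FYl FZ) u <= (chi u)%:E
               <= psup (assoc_chi FXu FYu FZ) u)%E]]).
Proof.
move=> [dXl dXu hX] [dYl dYu hY] dZ dX dY bX bY.
have uXl := dist_unit dXl; have uXu := dist_unit dXu; have uYl := dist_unit dYl.
have uYu := dist_unit dYu; have uZ := dist_unit dZ; have uX := dist_unit dX.
have uY := dist_unit dY.
have mZ := dist_mono dZ.
split.
  split; [|split] => x.
  - case/andP: (bX x) => h1 h2; case/andP: (uZ x) => z0 _.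
    by rewrite !ler_wpM2r.
  - case/andP: (bY x) => h1 h2; case/andP: (uZ x) => z0 _.
    by rewrite !ler_wpM2r.
  - case/andP: (bY x) => h1 h2; case/andP: (uZ x) => z0 z1.
    apply/andP; split; nra.
have cX := comon_mono (dist_mono dX) mZ.
have cY := comon_mono (dist_mono dY) mZ.
have cXl := comon_mono (dist_mono dXl) mZ.
have cYl := comon_mono (dist_mono dYl) mZ.
have cXu := comon_mono (dist_mono dXu) mZ.
have cYu := comon_mono (dist_mono dYu) mZ.
exists (D FX FZ), (D FY FZ), (chiD FY FZ); split.
- exact: phi_ok.
- exact: phi_ok.
- exact: chi_ok.
move=> u hu; split.
- apply/andP; split.
    apply: ereal_inf_le; exists (D FXl FZ u)%:E; first by exists (D FXl FZ) => //; exact: phi_ok.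
    rewrite lee_fin; apply: D_monoa => // x; by case/andP: (bX x).
  apply: ereal_sup_ge; exists (D FXu FZ u)%:E; first by exists (D FXu FZ) => //; exact: phi_ok.
  rewrite lee_fin; apply: D_monoa => // x; by case/andP: (bX x).
- apply/andP; split.
    apply: ereal_inf_le; exists (D FYl FZ u)%:E; first by exists (D FYl FZ) => //; exact: phi_ok.
    rewrite lee_fin; apply: D_monoa => // x; by case/andP: (bY x).
  apply: ereal_sup_ge; exists (D FYu FZ u)%:E; first by exists (D FYu FZ) => //; exact: phi_ok.
  rewrite lee_fin; apply: D_monoa => // x; by case/andP: (bY x).
- apply/andP; split.
    apply: ereal_inf_le; exists (chiD FYl FZ u)%:E; first by exists (chiD FYl FZ) => //; exact: chi_ok.
    rewrite lee_fin /chiD lerB // ; apply: D_monoa; try exact: unitv_neg.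
    move=> x; case/andP: (bY x) => h1 h2; lra.
  apply: ereal_sup_ge; exists (chiD FYu FZ u)%:E; first by exists (chiD FYu FZ) => //; exact: chi_ok.
  rewrite lee_fin /chiD lerB // ; apply: D_monoa; try exact: unitv_neg.
  move=> x; case/andP: (bY x) => h1 h2; lra.
Qed.
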